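(* (Rolle's theorem for $\alpha$-fractional differentiable functions.) Let $0<a<b$ and let $f:[a,b]\to\mathbb{R}$ be a function such that (1) $f$ is continuous on $[a,b]$, (2) $f$ is $\alpha$-differentiable at every point of $(a,b)$ for some $\alpha\in(0,1)$, and (3) $f(a)=f(b)$. Then there exists $c\in(a,b)$ such that $\mathcal{D}^\alpha(f)(c)=0$.
   Context: For a real function $f$, a point $t>0$ in the interior of its domain, and $\alpha\in(0,1)$, the $\alpha$-fractional derivative of $f$ at $t$ is $\mathcal{D}^\alpha(f)(t)=\lim_{\epsilon\to 0}\frac{f(te^{\epsilon t^{-\alpha}})-f(t)}{\epsilon}$, and $f$ is $\alpha$-differentiable at $t$ if this limit exists (as a real number). *)

(* Defs.v *)
From Stdlib Require Import Reals.
From Coquelicot Require Import Coquelicot.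
Open Scope R_scope.

Definition frac_quot (alpha : R) (f : R -> R) (t : R) (eps : R) : R :=
  (f (t * exp (eps * Rpower t (- alpha))) - f t) / eps.

Definition is_frac_derive (alpha : R) (f : R -> R) (t L : R) : Prop :=
  is_lim (frac_quot alpha f t) 0 L.

Definition frac_differentiable (alpha : R) (f : R -> R) (t : R) : Prop :=
  exists L : R, is_frac_derive alpha f t L.

Definition continuous_on_closed (a b : R) (f : R -> R) : Prop :=
  forall x, a <= x <= b ->
    filterlim f (within (fun y => a <= y <= b) (locally x)) (locally (f x)).

(* Main.v *)
Require Import Defs.
From Stdlib Require Import Reals Lra.
From Coquelicot Require Import Coquelicot.
Open Scope R_scope.

Lemma core (q : R -> R) (L d1 d2 : R) : 0 < d1 -> 0 < d2 ->
  (forall e, 0 < e < d1 -> q e <= 0) -> (forall e, -d2 < e < 0 -> 0 <= q e) ->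
  is_lim q 0 L -> L = 0.
Proof.
  intros H1 H2 Hp Hn Hl. apply is_lim_spec in Hl. unfold is_lim' in Hl.
  destruct (Rtotal_order L 0) as [HL|[HL|HL]]; auto.
  - destruct (Hl (mkposreal (-L) ltac:(lra))) as [d Hd]. simpl in Hd.
    set (e := - Rmin (d/2) (d2/2)).
    assert (He : -d2 < e < 0).
    { unfold e. pose proof (Rmin_r (d/2) (d2/2)). pose proof (cond_pos d).
      apply Rmin_case_strong; intros; lra. }
    assert (Hb : ball 0 d e).
    { unfold ball; simpl; unfold AbsRing_ball, abs, minus, plus, opp; simpl.
      pose proof (Rmin_l (d/2) (d2/2)). pose proof (cond_pos d).
      rewrite Ropp_0, Rplus_0_r, Rabs_left by lra. unfold e. apply Rmin_case_strong; intros; lra. }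
    specialize (Hd e Hb ltac:(lra)). specialize (Hn e He).
    apply Rabs_def2 in Hd. lra.
  - destruct (Hl (mkposreal L HL)) as [d Hd]. simpl in Hd.
    set (e := Rmin (d/2) (d1/2)).
    assert (He : 0 < e < d1).
    { unfold e. pose proof (cond_pos d).
      apply Rmin_case_strong; intros; lra. }
    assert (Hb : ball 0 d e).
    { unfold ball; simpl; unfold AbsRing_ball, abs, minus, plus, opp; simpl.
      pose proof (Rmin_l (d/2) (d1/2)). pose proof (cond_pos d).
      rewrite Ropp_0, Rplus_0_r, Rabs_right by lra. unfold e. apply Rmin_case_strong; intros; lra. }
    specialize (Hd e Hb ltac:(lra)). specialize (Hp e He).
    apply Rabs_def2 in Hd. lra.
Qed.

Lemma maxlemma (a b alpha : R) (f : R -> R) (c L : R) : 0 < a -> a < c < b ->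
  (forall y, a <= y <= b -> f y <= f c) -> is_frac_derive alpha f c L -> L = 0.
Proof.
  intros Ha Hc Hm Hl.
  assert (Hk : 0 < Rpower c (-alpha)) by (unfold Rpower; apply exp_pos).
  set (k := Rpower c (-alpha)) in *.
  assert (Hlb : 0 < ln (b / c)).
  { rewrite <- ln_1. apply ln_increasing; try lra. apply Rlt_div_r; lra. }
  assert (Hla : 0 < ln (c / a)).
  { rewrite <- ln_1. apply ln_increasing; try lra. apply Rlt_div_r; lra. }
  apply (core (frac_quot alpha f c) L (ln (b/c) / k) (ln (c/a) / k)).
  - apply Rdiv_lt_0_compat; lra.
  - apply Rdiv_lt_0_compat; lra.
  - intros e He. unfold frac_quot. fold k.
    assert (Hek : e * k < ln (b/c)).
    { destruct He as [He1 He2]. apply Rlt_div_r in He2; lra. }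
    assert (H1 : exp (e*k) < b / c).
    { rewrite <- (exp_ln (b/c)) by (apply Rdiv_lt_0_compat; lra). now apply exp_increasing. }
    assert (H2 : 1 < exp (e*k)).
    { rewrite <- exp_0. apply exp_increasing. nra. }
    assert (c * exp (e*k) < b).
    { apply Rlt_div_r in H1; lra. }
    assert (f (c * exp (e * k)) <= f c) by (apply Hm; nra).
    unfold Rdiv. apply Rmult_le_0_r. lra. left. apply Rinv_0_lt_compat; lra.
  - intros e He. unfold frac_quot. fold k.
    assert (Hek : - ln (c/a) < e * k).
    { destruct He as [He1 He2].
      assert (ln (c/a) / k * k = ln (c/a)) by (field; lra). nra. }
    assert (Hca : ln (a / c) = - ln (c / a)).
    { rewrite <- ln_Rinv by (apply Rdiv_lt_0_compat; lra). f_equal. field. lra. }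
    assert (H1 : a / c < exp (e*k)).
    { rewrite <- (exp_ln (a/c)) by (apply Rdiv_lt_0_compat; lra). apply exp_increasing. lra. }
    assert (H2 : exp (e*k) < 1).
    { rewrite <- exp_0. apply exp_increasing. nra. }
    assert (a < c * exp (e*k)).
    { apply Rlt_div_l in H1; lra. }
    assert (f (c * exp (e * k)) <= f c) by (apply Hm; nra).
    unfold Rdiv. assert (/e < 0) by (apply Rinv_lt_0_compat; lra). nra.
  - exact Hl.
Qed.
Lemma clamp_cont (a b : R) (f : R -> R) c : a <= b -> a <= c <= b ->
  continuous_on_closed a b f ->
  continuity_pt (fun x => f (Rmax a (Rmin b x))) c.
Proof.
  intros Hab Hc Hf. apply continuity_pt_filterlim.
  assert (Ec : Rmax a (Rmin b c) = c).
  { rewrite Rmin_right by lra. rewrite Rmax_right by lra. reflexivity. }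
  rewrite Ec. intros P [eps HP].
  assert (H := Hf c Hc (ball (f c) eps) (locally_ball (f c) eps)).
  destruct H as [d Hd]. exists d. intros y Hy. apply HP.
  apply Hd.
  - unfold ball in *; simpl in *; unfold AbsRing_ball, abs, minus, plus, opp in *; simpl in *.
    revert Hy. unfold Rmax, Rmin. repeat destruct Rle_dec; unfold Rabs; repeat destruct Rcase_abs; intros; lra.
  - unfold Rmax, Rmin. repeat destruct Rle_dec; lra.
Qed.

Lemma minlemma (a b alpha : R) (f : R -> R) (c : R) : 0 < a -> a < c < b ->
  (forall y, a <= y <= b -> f c <= f y) -> frac_differentiable alpha f c ->
  is_frac_derive alpha f c 0.
Proof.
  intros Ha Hc Hm [L HL].
  assert (H : is_frac_derive alpha (fun x => - f x) c (- L)).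
  { unfold is_frac_derive in *. apply is_lim_ext with (f := fun e => - frac_quot alpha f c e).
    - intros e. unfold frac_quot, Rdiv. ring.
    - apply (is_lim_opp _ _ (Finite L)) in HL. exact HL. }
  assert (- L = 0).
  { apply (maxlemma a b alpha (fun x => - f x) c (-L)); auto. intros y Hy. specialize (Hm y Hy). lra. }
  replace 0 with L by lra. exact HL.
Qed.

Lemma maxlemma' (a b alpha : R) (f : R -> R) (c : R) : 0 < a -> a < c < b ->
  (forall y, a <= y <= b -> f y <= f c) -> frac_differentiable alpha f c ->
  is_frac_derive alpha f c 0.
Proof.
  intros Ha Hc Hm [L HL].
  assert (L = 0) by (apply (maxlemma a b alpha f c L); auto).
  subst. exact HL.
Qed.

Theorem mainTheorem5 (a b alpha : R) (f : R -> R) :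
  0 < a -> a < b -> 0 < alpha < 1 ->
  continuous_on_closed a b f ->
  (forall t, a < t < b -> frac_differentiable alpha f t) ->
  f a = f b ->
  exists c, a < c < b /\ is_frac_derive alpha f c 0.
Proof.
  intros Ha Hab Hal Hf Hd Hfab.
  set (g := fun x => f (Rmax a (Rmin b x))).
  assert (Eg : forall x, a <= x <= b -> g x = f x).
  { intros x Hx. unfold g. rewrite Rmin_right by lra. rewrite Rmax_right by lra. reflexivity. }
  assert (Hg : forall c, a <= c <= b -> continuity_pt g c)
    by (intros; apply clamp_cont; auto; lra).
  destruct (continuity_ab_maj g a b ltac:(lra) Hg) as [M [HM HMr]].
  destruct (continuity_ab_min g a b ltac:(lra) Hg) as [m [Hm Hmr]].
  destruct (Req_dec M a) as [EM|EM]; [|destruct (Req_dec M b) as [EM'|EM']].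
  3:{ assert (a < M < b) by (destruct HMr as [H1 H2]; split; [destruct H1|destruct H2]; auto; congruence).
      exists M. split; [lra|]. apply (maxlemma' a b); auto; try lra.
      intros y Hy. rewrite <- (Eg y Hy), <- (Eg M HMr). auto. }
  all: destruct (Req_dec m a) as [Em|Em]; [|destruct (Req_dec m b) as [Em'|Em']].
  all: try (assert (a < m < b) by (destruct Hmr as [H1 H2]; split; [destruct H1|destruct H2]; auto; congruence);
      exists m; split; [lra|]; apply (minlemma a b); auto; try lra;
      intros y Hy; rewrite <- (Eg y Hy), <- (Eg m Hmr); auto; fail).
  all: exists ((a+b)/2); split; try lra; apply (maxlemma' a b); [lra|lra| |apply Hd; lra];
      intros y Hy; rewrite <- (Eg y Hy), <- (Eg ((a+b)/2) ltac:(lra));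
      specialize (HM y Hy); specialize (Hm ((a+b)/2) ltac:(lra));
      rewrite ?EM, ?EM', ?Em, ?Em' in *; rewrite ?Eg in * by lra; lra.
Qed.
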